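(* Let $\kappa$ be any infinite cardinal. Then there is a partition $[\kappa]^{<\omega}=A_0\cup A_1$ into two cells such that for no $i\in 2$ and no uncountable family $X\subseteq[\kappa]^{<\omega}$ of pairwise disjoint finite subsets of $\kappa$ do we have $\mathrm{FU}(X)\subseteq A_i$. Consequently, for every uncountable cardinal $\lambda$ and every cardinal $\kappa\geq\lambda$, the statement $\mathrm{Hind}(\kappa,\lambda)$ fails.
   Context: $[\kappa]^{<\omega}$ denotes the family of all finite subsets of $\kappa$. For a family $X$ of sets, $\mathrm{FU}(X)=\{\bigcup_{Y\in F}Y : F\subseteq X \text{ finite and nonempty}\}$ is the set of finite unions of elements of $X$. For cardinals $\lambda\leq\kappa$, $\mathrm{Hind}(\kappa,\lambda)$ is the statement: for every partition $[\kappa]^{<\omega}=A_0\cup A_1$ into two cells there exist a family $X\subseteq[\kappa]^{<\omega}$ of cardinality $\lambda$ consisting of pairwise disjoint finite subsets of $\kappa$, and an $i\in 2$, such that $\mathrm{FU}(X)\subseteq A_i$. *)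

(* Defs.v *)
From mathcomp Require Import all_boot.
From mathcomp Require Import boolp classical_sets functions cardinality.
Set Implicit Arguments. Unset Strict Implicit. Unset Printing Implicit Defensive.
Local Open Scope classical_set_scope.
Local Open Scope card_scope.

Definition finsubsets (K : Type) : set (set K) := [set A | finite_set A].

Definition FU (K : Type) (X : set (set K)) : set (set K) :=
  [set U | exists F : set (set K),
      [/\ F `<=` X, finite_set F, F !=set0 & U = \bigcup_(Y in F) Y]].

Definition pw_disjoint (K : Type) (X : set (set K)) : Prop := trivIset X id.

Definition two_partition (K : Type) (A0 A1 : set (set K)) : Prop :=
  A0 `|` A1 = @finsubsets K /\ A0 `&` A1 = set0.

(* Hind(kappa, lambda), kappa = |K|, lambda = |L| *)
Definition Hind (K L : Type) : Prop :=
  forall A0 A1 : set (set K), two_partition A0 A1 ->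
    exists X : set (set K),
      [/\ X `<=` @finsubsets K, pw_disjoint X, X #= [set: L] &
          (FU X `<=` A0 \/ FU X `<=` A1)].

(* Main.v *)
Require Import Defs.
From mathcomp Require Import all_boot.
From mathcomp Require Import boolp classical_sets functions cardinality.
Local Open Scope classical_set_scope.
Local Open Scope card_scope.

Lemma I0E : `I_0 = set0.
Proof. by apply/seteqP; split => x. Qed.

Lemma card_I0 T (A : set T) : A #= `I_0 -> A = set0.
Proof. by rewrite I0E card_eq0 => /eqP. Qed.

Lemma card_uniq T (A : set T) n m : A #= `I_n -> A #= `I_m -> n = m.
Proof.
move=> h1 h2; apply/card_eq_II.
exact: card_eq_trans (card_esym h1) h2.
Qed.

Lemma card_disjU T (A : set T) n : A #= `I_n -> forall m (B : set T),
  B #= `I_m -> A `&` B = set0 -> A `|` B #= `I_(n + m).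
Proof.
move=> hA m; elim: m => [|m IH] B hB hAB.
  by rewrite (@card_I0 _ _ hB) setU0 addn0.
move/eq_cardSP: hB => [x Bx hBx].
rewrite addnS; apply/eq_cardSP; exists x; first by right.
have -> : (A `|` B) `\ x = A `|` (B `\ x).
  apply/seteqP; split => y /=.
    by move=> [[Ay|By] yx]; [left|right].
  move=> [Ay|[By yx]]; split; [by left| |by right|by []].
  move=> yx; subst y.
  by have : (A `&` B) x by []; rewrite hAB.
apply: IH => //.
apply/seteqP; split => y //= [Ay [By _]].
by have : (A `&` B) y by []; rewrite hAB.
Qed.

Definition sz {K : Type} (A : set K) : nat := xget 0%N [set n | A #= `I_n].

Lemma szP {K : Type} (A : set K) : finite_set A -> A #= `I_(sz A).
Proof. by move=> [n hn]; apply: (@xgetPex nat 0%N [set n | A #= `I_n]); exists n. Qed.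

Definition col0 (K : Type) : set (set K) :=
  [set A | finite_set A /\ ~~ odd (trunc_log 2 (sz A))].
Definition col1 (K : Type) : set (set K) :=
  [set A | finite_set A /\ odd (trunc_log 2 (sz A))].

Lemma col_part (K : Type) : two_partition (@col0 K) (@col1 K).
Proof.
split; apply/seteqP; split => A /=.
- by case=> -[].
- by move=> fA; case: (boolP (odd (trunc_log 2 (sz A)))) => h; [right|left].
- by move=> [[_ h1] [_ h2]]; rewrite h2 in h1.
- by [].
Qed.

Lemma FU1 {K : Type} (X : set (set K)) y : X y -> FU X y.
Proof.
move=> Xy; exists [set y]; split.
- by move=> z ->.
- exact: finite_set1.
- by exists y.
- by rewrite bigcup_set1.
Qed.

Lemma FU2 {K : Type} (X : set (set K)) y1 y2 : X y1 -> X y2 -> FU X (y1 `|` y2).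
Proof.
move=> X1 X2; exists [set y1; y2]; split.
- by move=> z [->|->].
- exact: finite_set2.
- by exists y1; left.
- rewrite bigcup_setU1 bigcup_set1 //.
Qed.

Lemma part1 (K : Type) : 
       forall X : set (set K),
         X `<=` @finsubsets K -> pw_disjoint X -> ~ countable X ->
         ~ (FU X `<=` @col0 K) /\ ~ (FU X `<=` @col1 K).
Proof.
move=> X Xf Xd Xc.
have [y1 [y2 [X1 X2 y12 sz12 sz0]]] : exists y1 y2, [/\ X y1, X y2, y1 <> y2,
   sz y1 = sz y2 & (0 < sz y1)%N].
  apply: contra_notP Xc => hn; apply/countable_injP; exists (@sz K).
  move=> a b; rewrite !inE => Xa Xb eab.
  have [a0|apos] := posnP (sz a).
    have Ea := szP _ (Xf _ Xa); have Eb := szP _ (Xf _ Xb).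
    rewrite -eab a0 in Eb; rewrite a0 in Ea.
    by rewrite (@card_I0 _ _ Ea) (@card_I0 _ _ Eb).
  apply: contrapT => ab; apply: hn; exists a, b; split => //.
have dis : y1 `&` y2 = set0.
  apply/seteqP; split => x // hx; exfalso; apply: y12.
  by apply: Xd => //; exists x.
have E1 := szP _ (Xf _ X1); have E2 := szP _ (Xf _ X2).
rewrite -sz12 in E2.
have EU := @card_disjU _ _ _ E1 _ _ E2 dis.
have fU : finite_set (y1 `|` y2) by exists (sz y1 + sz y1)%N.
have szU : sz (y1 `|` y2) = (sz y1).*2.
  by rewrite -addnn; apply: (@card_uniq _ _ _ _ (szP _ fU) EU).
have F1 := @FU1 _ X _ X1; have F2 := @FU2 _ X _ _ X1 X2.
have tl : trunc_log 2 (sz (y1 `|` y2)) = (trunc_log 2 (sz y1)).+1.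
  by rewrite szU trunc_log2_double.
split=> h.
- have [_ h1] := h _ F1; have [_ h2] := h _ F2.
  by move: h2; rewrite tl /= h1.
- have [_ h1] := h _ F1; have [_ h2] := h _ F2.
  by move: h2; rewrite tl /= h1.
Qed.

Theorem theorem2p1 :
  (forall K : Type, infinite_set [set: K] ->
     exists A0 A1 : set (set K), two_partition A0 A1 /\
       forall X : set (set K),
         X `<=` @finsubsets K -> pw_disjoint X -> ~ countable X ->
         ~ (FU X `<=` A0) /\ ~ (FU X `<=` A1))
  /\
  (forall K L : Type, ~ countable [set: L] -> [set: L] #<= [set: K] ->
     ~ Hind K L).
Proof.
split.
  move=> K _; exists (@col0 K), (@col1 K); split; [exact: col_part|exact: part1].
move=> K L Lc LK hH.
have [X [Xf Xd XL hX]] := hH _ _ (col_part K).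
have Xc : ~ countable X.
  move=> cX; apply: Lc; apply: card_le_trans cX.
  by move: XL; rewrite card_eq_le => /andP[].
have [h0 h1] := @part1 K X Xf Xd Xc.
by case: hX.
Qed.
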